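(* Let $C\in C^1(I;\mathbb R^n)$ satisfy $|\partial_\theta C(\theta,v)|=l(v)$ for all $(\theta,v)$, where $l:[0,1]\to(0,\infty)$ is continuous, and set $f(\theta,v)=\langle T(\theta,v),\partial_vC(\theta,v)\rangle$. For $\varphi\in C^1([0,1];\mathbb R)$ let $\widetilde C_\varphi(\theta,v)=C(\theta+\varphi(v),v)$. Then $$\inf_{\varphi}\int_I|\pi_{\widetilde T}\,\partial_v\widetilde C_\varphi|^2\,d\theta\,dv=\int_0^1\int_{S^1}\Big(f(\theta,v)-\frac1{2\pi}\int_{S^1}f(s,v)\,ds\Big)^2d\theta\,dv,$$ where $\widetilde T$ denotes the unit tangent of $\widetilde C_\varphi$.
   Context: $S^1=\mathbb R/2\pi\mathbb Z$, $I=S^1\times[0,1]$; $T=\partial_\theta C/|\partial_\theta C|$; $\pi_T w=\langle w,T\rangle T$. *)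

(* Defs.v *)
From Stdlib Require Import Reals.
From Coquelicot Require Import Coquelicot.
Open Scope R_scope.

(* Vectors in R^n are represented as functions nat -> R, only the
   coordinates 0 .. n-1 being relevant. *)
Fixpoint sumR (n : nat) (a : nat -> R) : R :=
  match n with O => 0 | S m => sumR m a + a m end.

Definition dotn (n : nat) (u w : nat -> R) : R := sumR n (fun k => u k * w k).
Definition normn (n : nat) (u : nat -> R) : R := sqrt (dotn n u u).
Definition scalev (c : R) (u : nat -> R) : nat -> R := fun k => c * u k.

Definition unitv (n : nat) (u : nat -> R) : nat -> R := scalev (/ normn n u) u.

Definition projT (n : nat) (t w : nat -> R) : nat -> R := scalev (dotn n w t) t.

Definition inI (v : R) : Prop := 0 <= v <= 1.

(* joint continuity on S^1 x [0,1] (theta in R, periodic functions) *)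
Definition cont_I (g : R -> R -> R) : Prop :=
  forall th v, inI v ->
    filterlim (fun p : R * R => g (fst p) (snd p))
      (within (fun p : R * R => inI (snd p)) (locally (th, v)))
      (locally (g th v)).

Definition cont_01 (g : R -> R) : Prop :=
  forall v, inI v -> filterlim g (within inI (locally v)) (locally (g v)).

Definition is_deriv_01 (g : R -> R) (v d : R) : Prop :=
  filterlim (fun h => (g (v + h) - g v) / h)
    (within (fun h => h <> 0 /\ inI (v + h)) (locally 0)) (locally d).

Definition is_pderivs (n : nat) (C Dt Dv : R -> R -> nat -> R) : Prop :=
  forall th v, inI v -> forall k, (k < n)%nat ->
    is_derive (fun s => C s v k) th (Dt th v k) /\
    is_deriv_01 (fun w => C th w k) v (Dv th v k).

Definition C1_I (n : nat) (C Dt Dv : R -> R -> nat -> R) : Prop :=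
  (forall th v, inI v -> forall k, C (th + 2 * PI) v k = C th v k) /\
  is_pderivs n C Dt Dv /\
  (forall k, (k < n)%nat ->
     cont_I (fun th v => C th v k) /\ cont_I (fun th v => Dt th v k) /\
     cont_I (fun th v => Dv th v k)).

Definition C1_01 (phi dphi : R -> R) : Prop :=
  (forall v, inI v -> is_deriv_01 phi v (dphi v)) /\ cont_01 phi /\ cont_01 dphi.

Definition reparam (C : R -> R -> nat -> R) (phi : R -> R) : R -> R -> nat -> R :=
  fun th v k => C (th + phi v) v k.

Definition int_I (g : R -> R -> R) : R :=
  RInt (fun v => RInt (fun th => g th v) 0 (2 * PI)) 0 1.

Definition energy (n : nat) (Dt' Dv' : R -> R -> nat -> R) : R :=
  int_I (fun th v =>
    let t := unitv n (Dt' th v) in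
    normn n (projT n t (Dv' th v)) ^ 2).

(* Main.v *)
Require Import Defs.
From Stdlib Require Import Reals Lra Lia.
From Coquelicot Require Import Coquelicot.
Open Scope R_scope.

Lemma ballR (x : R) (e : R) (y : R) : @ball R_UniformSpace x e y <-> Rabs (y - x) < e.
Proof. reflexivity. Qed.

Lemma cont_I_eps g th v : cont_I g -> inI v -> forall eps, 0 < eps ->
  exists d, 0 < d /\ forall th' v', inI v' -> Rabs (th' - th) < d -> Rabs (v' - v) < d ->
   Rabs (g th' v' - g th v) < eps.
Proof.
  intros H Hv eps He.
  specialize (H th v Hv).
  apply filterlim_locally with (eps := mkposreal eps He) in H.
  destruct H as [d Hd].
  exists d; split; [apply cond_pos|].
  intros th' v' Hv' H1 H2.
  apply (Hd (th', v')); [split; simpl; apply ballR; auto | exact Hv'].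
Qed.

Lemma cont_01_eps g v : cont_01 g -> inI v -> forall eps, 0 < eps ->
  exists d, 0 < d /\ forall v', inI v' -> Rabs (v' - v) < d ->
   Rabs (g v' - g v) < eps.
Proof.
  intros H Hv eps He.
  specialize (H v Hv).
  apply filterlim_locally with (eps := mkposreal eps He) in H.
  destruct H as [d Hd].
  exists d; split; [apply cond_pos|].
  intros v' Hv' H2.
  apply (Hd v'); [apply ballR; auto | exact Hv'].
Qed.

Lemma deriv01_eps g v d : is_deriv_01 g v d <-> forall eps, 0 < eps ->
  exists del, 0 < del /\ forall h, h <> 0 -> inI (v + h) -> Rabs h < del ->
   Rabs ((g (v + h) - g v) / h - d) < eps.
Proof.
  split.
  - intros H eps He.
    apply filterlim_locally with (eps := mkposreal eps He) in H.
    destruct H as [del Hd].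
    exists del; split; [apply cond_pos|].
    intros h H0 H1 H2.
    apply (Hd h); [apply ballR; rewrite Rminus_0_r; auto | split; auto].
  - intros H. apply filterlim_locally. intros [eps He].
    destruct (H eps He) as [del [Hdel Hd]].
    exists (mkposreal del Hdel). intros h Hb [H0 H1].
    apply ballR. assert (Hb2 : Rabs (h - 0) < del) by exact Hb. rewrite Rminus_0_r in Hb2. simpl. auto.
Qed.

Definition clamp (v : R) : R := Rmax 0 (Rmin 1 v).

Lemma clamp_in v : inI (clamp v).
Proof. unfold clamp, inI, Rmax, Rmin. repeat destruct Rle_dec; lra. Qed.

Lemma clamp_id v : inI v -> clamp v = v.
Proof. unfold clamp, inI, Rmax, Rmin. intros. repeat destruct Rle_dec; lra. Qed.

Lemma clamp_lip a b : Rabs (clamp a - clamp b) <= Rabs (a - b).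
Proof.
  unfold clamp, Rmax, Rmin. repeat destruct Rle_dec;
  unfold Rabs; repeat destruct Rcase_abs; lra.
Qed.

Lemma cont2d_of_eps h x y :
  (forall eps, 0 < eps -> exists d, 0 < d /\ forall u v, Rabs (u - x) < d -> Rabs (v - y) < d ->
     Rabs (h u v - h x y) < eps) -> continuity_2d_pt h x y.
Proof.
  intros H [eps He]. destruct (H eps He) as [d [Hd Hd2]].
  exists (mkposreal d Hd). intros u v H1 H2. simpl. apply Hd2; auto.
Qed.

Lemma cont2d_eps h x y : continuity_2d_pt h x y ->
  forall eps, 0 < eps -> exists d, 0 < d /\ forall u v, Rabs (u - x) < d -> Rabs (v - y) < d ->
     Rabs (h u v - h x y) < eps.
Proof.
  intros H eps He. destruct (H (mkposreal eps He)) as [[d Hd] Hd2].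
  exists d. split; auto.
Qed.

Lemma cont_of_eps (q : R -> R) y :
  (forall eps, 0 < eps -> exists d, 0 < d /\ forall v, Rabs (v - y) < d ->
     Rabs (q v - q y) < eps) -> continuous q y.
Proof.
  intros H. apply filterlim_locally. intros [eps He].
  destruct (H eps He) as [d [Hd Hd2]].
  exists (mkposreal d Hd). intros v Hv. apply ballR. apply Hd2. exact Hv.
Qed.

Lemma cont_eps (q : R -> R) y : continuous q y ->
  forall eps, 0 < eps -> exists d, 0 < d /\ forall v, Rabs (v - y) < d ->
     Rabs (q v - q y) < eps.
Proof.
  intros H eps He.
  apply filterlim_locally with (eps := mkposreal eps He) in H.
  destruct H as [[d Hd] Hd2]. exists d; split; auto.
Qed.

Lemma cont_I_clamp g : cont_I g -> forall x y, continuity_2d_pt (fun a b => g a (clamp b)) x y.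
Proof.
  intros H x y. apply cont2d_of_eps. intros eps He.
  destruct (cont_I_eps g x (clamp y) H (clamp_in y) eps He) as [d [Hd Hd2]].
  exists d; split; auto. intros u v H1 H2.
  apply Hd2; auto. apply clamp_in. eapply Rle_lt_trans; [apply clamp_lip|]; auto.
Qed.

Lemma cont_01_clamp g : cont_01 g -> forall y, continuous (fun b => g (clamp b)) y.
Proof.
  intros H y. apply cont_of_eps. intros eps He.
  destruct (cont_01_eps g (clamp y) H (clamp_in y) eps He) as [d [Hd Hd2]].
  exists d; split; auto. intros v H2.
  apply Hd2; auto. apply clamp_in. eapply Rle_lt_trans; [apply clamp_lip|]; auto.
Qed.

Lemma cont2d_of_cont_v (q : R -> R) x y : continuous q y -> continuity_2d_pt (fun _ b => q b) x y.
Proof.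
  intros H. apply cont2d_of_eps. intros eps He.
  destruct (cont_eps q y H eps He) as [d [Hd Hd2]].
  exists d; split; auto.
Qed.

Lemma RInt_minusR f g a b : ex_RInt f a b -> ex_RInt g a b ->
  RInt (fun x => f x - g x) a b = RInt f a b - RInt g a b.
Proof. intros. exact (RInt_minus f g a b H H0). Qed.

Lemma RInt_plusR f g a b : ex_RInt f a b -> ex_RInt g a b ->
  RInt (fun x => f x + g x) a b = RInt f a b + RInt g a b.
Proof. intros. exact (RInt_plus f g a b H H0). Qed.

Lemma RInt_scalR f a b c : ex_RInt f a b ->
  RInt (fun x => c * f x) a b = c * RInt f a b.
Proof. intros. exact (RInt_scal f a b c H). Qed.

Lemma RInt_constR a b c : RInt (fun _ => c) a b = (b - a) * c.
Proof. exact (RInt_const a b c). Qed.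

Lemma cont_first h : (forall x y, continuity_2d_pt h x y) -> forall v t, continuous (fun t => h t v) t.
Proof.
  intros H v t. apply cont_of_eps. intros eps He.
  destruct (cont2d_eps h t v (H t v) eps He) as [d [Hd Hd2]].
  exists d; split; auto. intros u Hu. apply Hd2; auto.
  rewrite Rminus_eq_0, Rabs_R0; auto.
Qed.

Lemma ex_RInt_2d h a b v : (forall x y, continuity_2d_pt h x y) -> ex_RInt (fun t => h t v) a b.
Proof. intros H. apply (ex_RInt_continuous (V:=R_CompleteNormedModule)). intros. apply cont_first; auto. Qed.

Lemma param_cont h a b : a <= b -> (forall x y, continuity_2d_pt h x y) ->
  forall y, continuous (fun v => RInt (fun t => h t v) a b) y.
Proof.
  intros Hab H y. apply cont_of_eps. intros eps He.
  assert (Hp : 0 < eps / (b - a + 1)) by (apply Rdiv_lt_0_compat; lra).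
  destruct (uniform_continuity_2d h a b (y - 1) (y + 1) (fun x y _ _ => H x y) (mkposreal _ Hp))
    as [[del Hdel] Hu]. simpl in Hu.
  exists (Rmin del 1). split. { apply Rmin_pos; lra. }
  intros v Hv.
  assert (Hv1 : Rabs (v - y) < del) by (eapply Rlt_le_trans; [exact Hv| apply Rmin_l]).
  assert (Hv2 : Rabs (v - y) < 1) by (eapply Rlt_le_trans; [exact Hv| apply Rmin_r]).
  rewrite <- RInt_minusR by (apply ex_RInt_2d; auto).
  eapply Rle_lt_trans.
  { apply abs_RInt_le_const with (M := eps / (b - a + 1)); auto.
    - apply (ex_RInt_minus (V:=R_NormedModule)); apply ex_RInt_2d; auto.
    - intros t Ht. left. apply Hu; try lra.
      + apply Rabs_lt_between' in Hv2. lra.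
      + rewrite Rminus_eq_0, Rabs_R0; lra. }
  apply Rlt_le_trans with ((b - a + 1) * (eps / (b - a + 1))).
  - apply Rmult_lt_compat_r; lra.
  - right. field. lra.
Qed.

Lemma sumR_ext n a b : (forall k, (k < n)%nat -> a k = b k) -> sumR n a = sumR n b.
Proof.
  induction n; simpl; intros H; auto.
  rewrite IHn by (intros; apply H; lia). rewrite H by lia. auto.
Qed.

Lemma sumR_plus n a b : sumR n (fun k => a k + b k) = sumR n a + sumR n b.
Proof. induction n; simpl; [lra|]. rewrite IHn; lra. Qed.

Lemma sumR_scal n c a : sumR n (fun k => c * a k) = c * sumR n a.
Proof. induction n; simpl; [lra|]. rewrite IHn; lra. Qed.

Lemma sumR_nonneg n a : (forall k, 0 <= a k) -> 0 <= sumR n a.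
Proof. induction n; simpl; intros; [lra|]. specialize (IHn H). specialize (H n). lra. Qed.

Lemma dotn_comm n u w : dotn n u w = dotn n w u.
Proof. unfold dotn. apply sumR_ext. intros; ring. Qed.

Lemma dotn_scal_l n c u w : dotn n (scalev c u) w = c * dotn n u w.
Proof. unfold dotn, scalev. rewrite <- sumR_scal. apply sumR_ext. intros; ring. Qed.

Lemma dotn_scal_r n c u w : dotn n u (scalev c w) = c * dotn n u w.
Proof. unfold dotn, scalev. rewrite <- sumR_scal. apply sumR_ext. intros; ring. Qed.

Lemma dotn_nonneg n u : 0 <= dotn n u u.
Proof. unfold dotn. apply sumR_nonneg. intros; apply Rle_0_sqr. Qed.

Lemma normn_sq n u : normn n u ^ 2 = dotn n u u.
Proof. unfold normn. rewrite <- Rsqr_pow2. apply Rsqr_sqrt. apply dotn_nonneg. Qed.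

Lemma dotn_ext n u u' w w' : (forall k, (k < n)%nat -> u k = u' k /\ w k = w' k) ->
  dotn n u w = dotn n u' w'.
Proof. intros H. unfold dotn. apply sumR_ext. intros k Hk. destruct (H k Hk) as [-> ->]; auto. Qed.

Lemma unitv_dot n D w : dotn n (unitv n D) w = / normn n D * dotn n D w.
Proof. unfold unitv. apply dotn_scal_l. Qed.

Lemma proj_sq n D w L : normn n D = L -> 0 < L ->
  normn n (projT n (unitv n D) w) ^ 2 = (dotn n (unitv n D) w) ^ 2.
Proof.
  intros HL HL0. rewrite normn_sq. unfold projT.
  rewrite dotn_scal_l, dotn_scal_r.
  rewrite (dotn_comm n w). unfold unitv. rewrite !dotn_scal_l, !dotn_scal_r.
  rewrite <- normn_sq, HL. field. lra.
Qed.

Lemma chain01 (Cf Dtf Dvf : R -> R -> R) phi dphi th v :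
  (forall s w, inI w -> is_derive (fun s => Cf s w) s (Dtf s w)) ->
  cont_I Dtf ->
  is_deriv_01 (fun w => Cf (th + phi v) w) v (Dvf (th + phi v) v) ->
  is_deriv_01 phi v dphi -> inI v ->
  is_deriv_01 (fun w => Cf (th + phi w) w) v (Dvf (th + phi v) v + dphi * Dtf (th + phi v) v).
Proof.
  intros Hd Hc HCv Hphi Hv.
  apply deriv01_eps. intros eps He.
  set (a := th + phi v). set (D1 := Dtf a v). set (D2 := Dvf a v).
  set (K := Rabs dphi + 1). set (K1 := Rabs D1 + 1).
  assert (HK : 0 < K) by (unfold K; pose proof (Rabs_pos dphi); lra).
  assert (HK1 : 0 < K1) by (unfold K1; pose proof (Rabs_pos D1); lra).
  assert (He1 : 0 < eps / (3 * K)) by (apply Rdiv_lt_0_compat; lra).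
  assert (He2 : 0 < Rmin 1 (eps / (3 * K1))) by (apply Rmin_pos; [lra| apply Rdiv_lt_0_compat; lra]).
  assert (He3 : 0 < eps / 3) by lra.
  destruct (cont_I_eps Dtf a v Hc Hv _ He1) as [dc [Hdc Hc2]].
  destruct (proj1 (deriv01_eps phi v dphi) Hphi _ He2) as [dp [Hdp Hp2]].
  destruct (proj1 (deriv01_eps _ v _) HCv _ He3) as [dv [Hdv Hv2]].
  exists (Rmin (Rmin dc dp) (Rmin dv (dc / K))).
  split. { repeat apply Rmin_pos; auto. apply Rdiv_lt_0_compat; lra. }
  intros h Hh0 Hvh Hh.
  assert (Hhc : Rabs h < dc) by (eapply Rlt_le_trans; [exact Hh|]; eapply Rle_trans; apply Rmin_l).
  assert (Hhp : Rabs h < dp) by (eapply Rlt_le_trans; [exact Hh|]; eapply Rle_trans; [apply Rmin_l| apply Rmin_r]).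
  assert (Hhv : Rabs h < dv) by (eapply Rlt_le_trans; [exact Hh|]; eapply Rle_trans; [apply Rmin_r| apply Rmin_l]).
  assert (HhK : Rabs h < dc / K) by (eapply Rlt_le_trans; [exact Hh|]; eapply Rle_trans; apply Rmin_r).
  set (r := (phi (v + h) - phi v) / h).
  assert (Hr : Rabs (r - dphi) < Rmin 1 (eps / (3 * K1))) by (apply Hp2; auto).
  assert (Hr1 : Rabs (r - dphi) < 1) by (eapply Rlt_le_trans; [exact Hr| apply Rmin_l]).
  assert (Hr2 : Rabs (r - dphi) < eps / (3 * K1)) by (eapply Rlt_le_trans; [exact Hr| apply Rmin_r]).
  assert (HrK : Rabs r <= K).
  { unfold K. replace r with ((r - dphi) + dphi) by ring.
    eapply Rle_trans; [apply Rabs_triang|]. lra. }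
  set (b := th + phi (v + h)).
  assert (Hba : b - a = r * h) by (unfold b, a, r; field; auto).
  destruct (MVT_cor4 (fun s => Cf s (v + h)) (fun s => Dtf s (v + h)) a (Rabs (b - a)))
    with (b := b) as [c [Hmvt Hca]].
  { intros c _. apply Hd. auto. }
  { right; reflexivity. }
  assert (Hbad : Rabs (b - a) < dc).
  { rewrite Hba, Rabs_mult.
    apply Rle_lt_trans with (K * Rabs h).
    - apply Rmult_le_compat_r; [apply Rabs_pos| auto].
    - apply Rmult_lt_reg_l with (/ K). apply Rinv_0_lt_compat; auto.
      replace (/ K * (K * Rabs h)) with (Rabs h) by (field; lra).
      replace (/ K * dc) with (dc / K) by (field; lra). auto. }
  assert (HD : Rabs (Dtf c (v + h) - D1) < eps / (3 * K)).
  { apply Hc2; auto. lra. replace (v + h - v) with h by ring. auto. }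
  assert (HS : Rabs ((Cf a (v + h) - Cf a v) / h - D2) < eps / 3) by (apply Hv2; auto).
  simpl. fold a. fold b.
  replace ((Cf b (v + h) - Cf a v) / h - (D2 + dphi * D1)) with
    ((Dtf c (v + h) - D1) * r + D1 * (r - dphi) + ((Cf a (v + h) - Cf a v) / h - D2)).
  2:{ replace (Cf b (v + h)) with (Cf a (v + h) + Dtf c (v + h) * (b - a)) by (simpl in Hmvt; lra).
      rewrite Hba. field. auto. }
  eapply Rle_lt_trans; [apply Rabs_triang|].
  eapply Rle_lt_trans; [apply Rplus_le_compat_r, Rabs_triang|].
  rewrite !Rabs_mult.
  assert (T1 : Rabs (Dtf c (v + h) - D1) * Rabs r <= eps / (3 * K) * K).
  { apply Rmult_le_compat; try apply Rabs_pos; lra. }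
  assert (T2 : Rabs D1 * Rabs (r - dphi) <= K1 * (eps / (3 * K1))).
  { assert (Rabs D1 <= K1) by (unfold K1; lra). apply Rmult_le_compat; try apply Rabs_pos; lra. }
  replace (eps / (3 * K) * K) with (eps / 3) in T1 by (field; lra).
  replace (K1 * (eps / (3 * K1))) with (eps / 3) in T2 by (field; lra).
  lra.
Qed.

Lemma deriv01_unique g v d1 d2 : inI v -> is_deriv_01 g v d1 -> is_deriv_01 g v d2 -> d1 = d2.
Proof.
  intros Hv H1 H2.
  destruct (Req_dec d1 d2) as [|Hne]; auto. exfalso.
  set (e := Rabs (d1 - d2) / 2).
  assert (He : 0 < e) by (unfold e; assert (d1 - d2 <> 0) by lra; pose proof (Rabs_pos_lt _ H); lra).
  destruct (proj1 (deriv01_eps _ _ _) H1 e He) as [a [Ha Ha2]].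
  destruct (proj1 (deriv01_eps _ _ _) H2 e He) as [b [Hb Hb2]].
  set (m := Rmin (Rmin a b) 1 / 2).
  assert (Hm : 0 < m) by (unfold m; assert (0 < Rmin (Rmin a b) 1) by (repeat apply Rmin_pos; lra); lra).
  assert (Hma : m < a) by (unfold m; pose proof (Rmin_l (Rmin a b) 1); pose proof (Rmin_l a b); lra).
  assert (Hmb : m < b) by (unfold m; pose proof (Rmin_l (Rmin a b) 1); pose proof (Rmin_r a b); lra).
  assert (Hm1 : m <= 1 / 2) by (unfold m; pose proof (Rmin_r (Rmin a b) 1); lra).
  unfold inI in Hv.
  destruct (Rle_dec v (1/2)) as [Hl|Hl].
  - specialize (Ha2 m). specialize (Hb2 m).
    assert (Hi : inI (v + m)) by (unfold inI; lra).
    assert (Ham : Rabs m < a) by (rewrite Rabs_pos_eq; lra).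
    assert (Hbm : Rabs m < b) by (rewrite Rabs_pos_eq; lra).
    specialize (Ha2 ltac:(lra) Hi Ham). specialize (Hb2 ltac:(lra) Hi Hbm).
    set (q := (g (v + m) - g v) / m) in *.
    assert (Rabs (d1 - d2) <= Rabs (q - d1) + Rabs (q - d2)).
    { replace (d1 - d2) with (- (q - d1) + (q - d2)) by ring.
      eapply Rle_trans; [apply Rabs_triang|]. rewrite Rabs_Ropp. lra. }
    unfold e in *. lra.
  - specialize (Ha2 (- m)). specialize (Hb2 (- m)).
    assert (Hi : inI (v + - m)) by (unfold inI; lra).
    assert (Ham : Rabs (- m) < a) by (rewrite Rabs_Ropp, Rabs_pos_eq; lra).
    assert (Hbm : Rabs (- m) < b) by (rewrite Rabs_Ropp, Rabs_pos_eq; lra).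
    specialize (Ha2 ltac:(lra) Hi Ham). specialize (Hb2 ltac:(lra) Hi Hbm).
    set (q := (g (v + - m) - g v) / - m) in *.
    assert (Rabs (d1 - d2) <= Rabs (q - d1) + Rabs (q - d2)).
    { replace (d1 - d2) with (- (q - d1) + (q - d2)) by ring.
      eapply Rle_trans; [apply Rabs_triang|]. rewrite Rabs_Ropp. lra. }
    unfold e in *. lra.
Qed.

Lemma derive_to_01 g v d : is_derive g v d -> is_deriv_01 g v d.
Proof.
  intros H. apply is_derive_Reals in H.
  apply deriv01_eps. intros eps He.
  destruct (H eps He) as [del Hd].
  exists del. split; [apply cond_pos|]. intros h H0 _ H2. apply Hd; auto.
Qed.

Lemma derive_shift (g : R -> R) c th d : is_derive g (th + c) d ->
  is_derive (fun s => g (s + c)) th d.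
Proof.
  intros H.
  assert (Hs : is_derive (fun s => s + c) th 1).
  { apply is_derive_Reals. replace 1 with (1 + 0) by ring.
    apply derivable_pt_lim_plus; [apply derivable_pt_lim_id| apply derivable_pt_lim_const]. }
  pose proof (is_derive_comp g (fun s => s + c) th d 1 H Hs) as Hc.
  replace d with (scal 1 d) by (unfold scal; simpl; unfold mult; simpl; ring). exact Hc.
Qed.

Lemma derive_periodic (g : R -> R) p x d1 d2 : (forall s, g (s + p) = g s) ->
  is_derive g x d1 -> is_derive g (x + p) d2 -> d1 = d2.
Proof.
  intros Hp H1 H2.
  apply derive_shift in H2.
  apply is_derive_unique in H1. apply is_derive_unique in H2.
  rewrite <- H1, <- H2. apply Derive_ext. intros; rewrite Hp; auto.
Qed.

Lemma exR_cont (q : R -> R) a b : (forall x, continuous q x) -> @ex_RInt R_NormedModule q a b.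
Proof. intros H. apply (ex_RInt_continuous (V:=R_CompleteNormedModule)). auto. Qed.

Lemma RInt_shift (q : R -> R) a b c : (forall x, continuous q x) ->
  RInt (fun t => q (t + c)) a b = RInt q (a + c) (b + c).
Proof.
  intros H.
  pose proof (RInt_comp_lin (V:=R_CompleteNormedModule) q 1 c a b (exR_cont q _ _ H)) as E.
  replace (1 * a + c) with (a + c) in E by ring.
  replace (1 * b + c) with (b + c) in E by ring.
  rewrite <- E. apply RInt_ext. intros x _.
  unfold scal; simpl; unfold mult; simpl. rewrite Rmult_1_l. f_equal. ring.
Qed.

Lemma RInt_periodic (q : R -> R) p c : (forall x, continuous q x) -> (forall s, q (s + p) = q s) ->
  RInt (fun t => q (t + c)) 0 p = RInt q 0 p.
Proof.
  intros H Hp.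
  rewrite RInt_shift by auto. rewrite Rplus_0_l.
  assert (E1 := RInt_Chasles (V:=R_CompleteNormedModule) q c 0 p (exR_cont q _ _ H) (exR_cont q _ _ H)).
  assert (E2 := RInt_Chasles (V:=R_CompleteNormedModule) q c p (p + c) (exR_cont q _ _ H) (exR_cont q _ _ H)).
  assert (E3 : RInt q p (p + c) = RInt q 0 c).
  { rewrite <- (Rplus_0_l p) at 1. rewrite (Rplus_comm p c).
    replace (0 + p) with (0 + p) by ring.
    rewrite <- RInt_shift by auto. apply RInt_ext. intros; apply Hp. }
  assert (E4 := opp_RInt_swap (V:=R_CompleteNormedModule) q 0 c (exR_cont q _ _ H)).
  simpl in *. unfold plus, opp in *; simpl in *.
  replace (c + p) with (p + c) by ring.
  rewrite <- E2, E3, <- E1, <- E4. ring.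
Qed.

Lemma cont_of_2d (q : R -> R) y : continuity_2d_pt (fun _ v => q v) 0 y -> continuous q y.
Proof.
  intros H. apply cont_of_eps. intros eps He.
  destruct (cont2d_eps _ _ _ H eps He) as [d [Hd Hd2]].
  exists d; split; auto. intros v Hv. apply (Hd2 0 v); auto.
  rewrite Rminus_0_r, Rabs_R0; auto.
Qed.

Lemma cont_to_01 g : (forall v, continuous g v) -> cont_01 g.
Proof.
  intros H v _. eapply filterlim_filter_le_1; [apply filter_le_within| apply H].
Qed.

Lemma deriv01_ext g g' v d : inI v -> (forall w, inI w -> g w = g' w) ->
  is_deriv_01 g v d -> is_deriv_01 g' v d.
Proof.
  intros Hv He H. apply deriv01_eps. intros eps Heps.
  destruct (proj1 (deriv01_eps _ _ _) H eps Heps) as [del [Hd Hd2]].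
  exists del; split; auto. intros h H0 H1 H2.
  rewrite <- !He; auto.
Qed.

Lemma sumR_cont2d n (a : nat -> R -> R -> R) x y :
  (forall k, (k < n)%nat -> continuity_2d_pt (a k) x y) ->
  continuity_2d_pt (fun u v => sumR n (fun k => a k u v)) x y.
Proof.
  induction n; intros H; simpl.
  - apply continuity_2d_pt_const.
  - apply continuity_2d_pt_plus.
    + apply IHn. intros; apply H; lia.
    + apply H; lia.
Qed.

Definition f0 n (Ct Cv : R -> R -> nat -> R) th v := dotn n (unitv n (Ct th v)) (Cv th v).
Definition Mv n Ct Cv v := / (2 * PI) * RInt (fun s => f0 n Ct Cv s v) 0 (2 * PI).
Definition Tv n Ct Cv v := RInt (fun th => (f0 n Ct Cv th v - Mv n Ct Cv v) ^ 2) 0 (2 * PI).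

Definition Hyps n (C Ct Cv : R -> R -> nat -> R) (l : R -> R) :=
  C1_I n C Ct Cv /\ (forall v, inI v -> 0 < l v) /\ cont_01 l /\
  (forall th v, inI v -> normn n (Ct th v) = l v).

Section S.
Variables (n : nat) (C Ct Cv : R -> R -> nat -> R) (l : R -> R).
Hypothesis H : Hyps n C Ct Cv l.

Lemma Ct_per th v k : inI v -> (k < n)%nat -> Ct (th + 2 * PI) v k = Ct th v k.
Proof.
  destruct H as [[Hper [Hpd Hc]] _]. intros Hv Hk.
  symmetry. apply (derive_periodic (fun s => C s v k) (2 * PI) th).
  - intros; apply Hper; auto.
  - apply (Hpd th v Hv k Hk).
  - apply (Hpd (th + 2 * PI) v Hv k Hk).
Qed.

Lemma Cv_per th v k : inI v -> (k < n)%nat -> Cv (th + 2 * PI) v k = Cv th v k.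
Proof.
  destruct H as [[Hper [Hpd Hc]] _]. intros Hv Hk.
  apply (deriv01_unique (fun w => C th w k) v _ _ Hv).
  - apply (deriv01_ext (fun w => C (th + 2 * PI) w k) (fun w => C th w k) v _ Hv).
    + intros; apply Hper; auto.
    + apply (Hpd (th + 2 * PI) v Hv k Hk).
  - apply (Hpd th v Hv k Hk).
Qed.

Lemma f0_eq th v : inI v -> f0 n Ct Cv th v = / l v * dotn n (Ct th v) (Cv th v).
Proof.
  destruct H as [_ [_ [_ Hn]]]. intros Hv.
  unfold f0. rewrite unitv_dot, Hn; auto.
Qed.

Lemma f0_per th v : inI v -> f0 n Ct Cv (th + 2 * PI) v = f0 n Ct Cv th v.
Proof.
  intros Hv. rewrite !f0_eq; auto. f_equal. apply dotn_ext.
  intros k Hk; split; [apply Ct_per| apply Cv_per]; auto.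
Qed.

Lemma lc_cont y : continuous (fun v => l (clamp v)) y.
Proof. destruct H as [_ [_ [Hl _]]]. apply cont_01_clamp; auto. Qed.

Lemma f0c_cont x y : continuity_2d_pt (fun th v => f0 n Ct Cv th (clamp v)) x y.
Proof.
  destruct H as [[Hper [Hpd Hc]] [Hpos [Hl Hn]]].
  apply continuity_2d_pt_ext with
    (f := fun th v => / l (clamp v) * sumR n (fun k => Ct th (clamp v) k * Cv th (clamp v) k)).
  { intros. rewrite f0_eq by apply clamp_in. reflexivity. }
  apply continuity_2d_pt_mult.
  - apply continuity_2d_pt_inv.
    + apply cont2d_of_cont_v. apply lc_cont.
    + apply Rgt_not_eq. apply Hpos. apply clamp_in.
  - apply sumR_cont2d. intros k Hk.
    apply continuity_2d_pt_mult.
    + apply (cont_I_clamp (fun th v => Ct th v k)). apply Hc; auto.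
    + apply (cont_I_clamp (fun th v => Cv th v k)). apply Hc; auto.
Qed.

Lemma Mc_cont y : continuous (fun v => Mv n Ct Cv (clamp v)) y.
Proof.
  apply cont_of_2d. unfold Mv.
  apply continuity_2d_pt_mult.
  - apply continuity_2d_pt_const.
  - apply cont2d_of_cont_v.
    apply (param_cont (fun s v => f0 n Ct Cv s (clamp v))).
    + pose proof PI_RGT_0; lra.
    + apply f0c_cont.
Qed.

Lemma Tc_cont y : continuous (fun v => Tv n Ct Cv (clamp v)) y.
Proof.
  unfold Tv.
  apply (param_cont (fun th v => (f0 n Ct Cv th (clamp v) - Mv n Ct Cv (clamp v)) ^ 2)).
  - pose proof PI_RGT_0; lra.
  - intros x z. simpl.
    apply continuity_2d_pt_mult.
    + apply continuity_2d_pt_minus; [apply f0c_cont| apply cont2d_of_cont_v, Mc_cont].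
    + apply continuity_2d_pt_mult; [|apply continuity_2d_pt_const].
      apply continuity_2d_pt_minus; [apply f0c_cont| apply cont2d_of_cont_v, Mc_cont].
Qed.

End S.

Section E.
Variables (n : nat) (C Ct Cv : R -> R -> nat -> R) (l : R -> R).
Hypothesis H : Hyps n C Ct Cv l.
Variables (phi dphi : R -> R) (Dt' Dv' : R -> R -> nat -> R).
Hypothesis Hphi : C1_01 phi dphi.
Hypothesis Hd : is_pderivs n (reparam C phi) Dt' Dv'.

Lemma rep_Dt th v k : inI v -> (k < n)%nat -> Dt' th v k = Ct (th + phi v) v k.
Proof.
  destruct H as [[Hper [Hpd Hc]] _]. intros Hv Hk.
  destruct (Hd th v Hv k Hk) as [H1 _].
  destruct (Hpd (th + phi v) v Hv k Hk) as [H2 _].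
  apply derive_shift in H2.
  apply is_derive_unique in H1. apply is_derive_unique in H2.
  rewrite <- H1, <- H2. reflexivity.
Qed.

Lemma rep_Dv th v k : inI v -> (k < n)%nat ->
  Dv' th v k = Cv (th + phi v) v k + dphi v * Ct (th + phi v) v k.
Proof.
  destruct H as [[Hper [Hpd Hc]] _]. intros Hv Hk.
  destruct (Hd th v Hv k Hk) as [_ H1].
  apply (deriv01_unique _ v _ _ Hv H1).
  apply (chain01 (fun s w => C s w k) (fun s w => Ct s w k) (fun s w => Cv s w k) phi (dphi v) th v).
  - intros s w Hw. apply (Hpd s w Hw k Hk).
  - apply Hc; auto.
  - apply (Hpd (th + phi v) v Hv k Hk).
  - apply Hphi; auto.
  - auto.
Qed.

Lemma integrand_eq th v : inI v ->
  (let t := unitv n (Dt' th v) in normn n (projT n t (Dv' th v)) ^ 2) =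
  (f0 n Ct Cv (th + phi v) v + dphi v * l v) ^ 2.
Proof.
  destruct H as [_ [Hpos [_ Hn]]]. intros Hv. cbv zeta.
  assert (HN : normn n (Dt' th v) = l v).
  { rewrite <- (Hn (th + phi v) v Hv). unfold normn. f_equal. apply dotn_ext.
    intros k Hk; rewrite rep_Dt; auto. }
  pose proof (Hpos v Hv) as Hl.
  rewrite (proj_sq n (Dt' th v) (Dv' th v) (l v) HN Hl).
  rewrite unitv_dot, HN.
  rewrite f0_eq with (C := C) (l := l) by auto.
  assert (E : dotn n (Dt' th v) (Dv' th v) =
    dotn n (Ct (th + phi v) v) (Cv (th + phi v) v) + dphi v * dotn n (Ct (th + phi v) v) (Ct (th + phi v) v)).
  { unfold dotn. rewrite <- sumR_scal, <- sumR_plus. apply sumR_ext.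
    intros k Hk. rewrite rep_Dt, rep_Dv; auto. ring. }
  rewrite E. rewrite <- normn_sq, Hn by auto. simpl. field. lra.
Qed.
End E.

Lemma inner_formula n C Ct Cv l v a c : Hyps n C Ct Cv l -> inI v ->
  RInt (fun th => (f0 n Ct Cv (th + c) v + a) ^ 2) 0 (2 * PI) =
  Tv n Ct Cv v + 2 * PI * (a + Mv n Ct Cv v) ^ 2.
Proof.
  intros H Hv.
  set (Fc := fun s w => f0 n Ct Cv s (clamp w)).
  assert (HFc : forall x y, continuity_2d_pt Fc x y) by (intros; apply (f0c_cont n C Ct Cv l H)).
  assert (HF : forall s, continuous (fun s => f0 n Ct Cv s v) s).
  { intros s. apply (continuous_ext (fun s => Fc s v)).
    - intros; unfold Fc; rewrite clamp_id; auto.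
    - apply cont_first; auto. }
  set (q := fun s => (f0 n Ct Cv s v + a) ^ 2).
  assert (Hq : forall s, continuous q s).
  { intros s. apply (continuous_ext (fun s => (Fc s v + a) ^ 2)).
    - intros; unfold Fc, q; rewrite clamp_id; auto.
    - apply (cont_first (fun s w => (Fc s w + a) ^ 2)). intros x y. simpl.
      apply continuity_2d_pt_mult; [|apply continuity_2d_pt_mult]; try apply continuity_2d_pt_const;
      apply continuity_2d_pt_plus; auto; apply continuity_2d_pt_const. }
  change (RInt (fun th => q (th + c)) 0 (2 * PI) = Tv n Ct Cv v + 2 * PI * (a + Mv n Ct Cv v) ^ 2).
  rewrite RInt_periodic; auto.
  2:{ intros s; unfold q. rewrite f0_per with (C := C) (l := l); auto. }
  set (M := Mv n Ct Cv v).
  set (F := fun s => f0 n Ct Cv s v).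
  assert (HRF0 : M = Mv n Ct Cv v) by reflexivity.
  assert (HRF : RInt F 0 (2 * PI) = 2 * PI * M).
  { unfold M, Mv. fold F. assert (2 * PI <> 0) by (pose proof PI_RGT_0; lra). rewrite <- Rmult_assoc, Rinv_r, Rmult_1_l by auto. reflexivity. }
  assert (HG : forall s, continuous (fun s => (F s - M) ^ 2) s).
  { intros s. apply (continuous_ext (fun s => (Fc s v - M) ^ 2)).
    - intros; unfold Fc, F; rewrite clamp_id; auto.
    - apply (cont_first (fun s w => (Fc s w - M) ^ 2)). intros x y. simpl.
      apply continuity_2d_pt_mult; [|apply continuity_2d_pt_mult]; try apply continuity_2d_pt_const;
      apply continuity_2d_pt_minus; auto; apply continuity_2d_pt_const. }
  assert (HL : forall s, continuous (fun s => 2 * (a + M) * F s + (a ^ 2 - M ^ 2)) s).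
  { intros s. apply (continuous_plus (fun s => 2 * (a + M) * F s) (fun _ => a ^ 2 - M ^ 2)).
    - apply (continuous_mult (fun _ => 2 * (a + M)) F). apply continuous_const. apply HF.
    - apply continuous_const. }
  transitivity (RInt (fun s => (F s - M) ^ 2 + (2 * (a + M) * F s + (a ^ 2 - M ^ 2))) 0 (2 * PI)).
  { apply RInt_ext. intros x _. unfold q, F. cbv beta. change ((f0 n Ct Cv x v + a) ^ 2 = (f0 n Ct Cv x v - M) ^ 2 + (2 * (a + M) * f0 n Ct Cv x v + (a ^ 2 - M ^ 2))). ring. }
  rewrite RInt_plusR by (apply exR_cont; auto).
  assert (HLin : forall s, continuous (fun s => 2 * (a + M) * F s) s).
  { intros s. apply (continuous_mult (fun _ => 2 * (a + M)) F); [apply continuous_const| apply HF]. }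
  rewrite RInt_plusR.
  2:{ apply exR_cont; auto. }
  2:{ apply exR_cont; intros; apply continuous_const. }
  rewrite RInt_scalR by (apply exR_cont; auto).
  rewrite RInt_constR, HRF. unfold Tv. fold M. fold F.
  unfold F. generalize (RInt (fun th : R => (f0 n Ct Cv th v - M) ^ 2) 0 (2 * PI)). intros X. apply Rplus_eq_compat_l. ring.
Qed.

Lemma energy_formula n C Ct Cv l phi dphi Dt' Dv' : Hyps n C Ct Cv l -> C1_01 phi dphi ->
  is_pderivs n (reparam C phi) Dt' Dv' ->
  energy n Dt' Dv' = RInt (fun v => Tv n Ct Cv v + 2 * PI * (dphi v * l v + Mv n Ct Cv v) ^ 2) 0 1.
Proof.
  intros H Hp Hd. unfold energy, int_I. apply RInt_ext. intros v Hv.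
  rewrite Rmin_left, Rmax_right in Hv by lra.
  assert (Hi : inI v) by (unfold inI; lra).
  transitivity (RInt (fun th => (f0 n Ct Cv (th + phi v) v + dphi v * l v) ^ 2) 0 (2 * PI)).
  - apply RInt_ext. intros th _. apply (integrand_eq n C Ct Cv l H phi dphi Dt' Dv' Hp Hd th v Hi).
  - apply (inner_formula n C Ct Cv l); auto.
Qed.

Lemma exRInt01 (g gc : R -> R) : (forall v, continuous gc v) -> (forall v, inI v -> gc v = g v) ->
  @ex_RInt R_NormedModule g 0 1.
Proof.
  intros Hc He. apply (ex_RInt_ext gc).
  - intros x Hx. rewrite Rmin_left, Rmax_right in Hx by lra. apply He. unfold inI; lra.
  - apply exR_cont; auto.
Qed.

Theorem mainTheorem5 (n : nat) (C Ct Cv : R -> R -> nat -> R) (l : R -> R) :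
  C1_I n C Ct Cv ->
  (forall v, inI v -> 0 < l v) -> cont_01 l ->
  (forall th v, inI v -> normn n (Ct th v) = l v) ->
  let f := fun th v => dotn n (unitv n (Ct th v)) (Cv th v) in
  is_glb_Rbar
    (fun J => exists (phi dphi : R -> R) (Dt' Dv' : R -> R -> nat -> R),
       C1_01 phi dphi /\
       is_pderivs n (reparam C phi) Dt' Dv' /\
       J = energy n Dt' Dv')
    (Finite (int_I (fun th v =>
       (f th v - / (2 * PI) * RInt (fun s => f s v) 0 (2 * PI)) ^ 2))).
Proof.
  intros HC Hpos Hl Hn f.
  assert (H : Hyps n C Ct Cv l) by exact (conj HC (conj Hpos (conj Hl Hn))).
  change (is_glb_Rbar
    (fun J => exists (phi dphi : R -> R) (Dt' Dv' : R -> R -> nat -> R),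
       C1_01 phi dphi /\
       is_pderivs n (reparam C phi) Dt' Dv' /\
       J = energy n Dt' Dv')
    (Finite (RInt (fun v => Tv n Ct Cv v) 0 1))).
  assert (HT : @ex_RInt R_NormedModule (fun v => Tv n Ct Cv v) 0 1).
  { apply (exRInt01 _ (fun v => Tv n Ct Cv (clamp v))).
    - apply (Tc_cont n C Ct Cv l H).
    - intros; rewrite clamp_id; auto. }
  set (psi := fun v => Mv n Ct Cv (clamp v) * / l (clamp v)).
  assert (Hpsi : forall v, continuous psi v).
  { intros v. apply cont_of_2d. unfold psi.
    apply continuity_2d_pt_mult.
    - apply cont2d_of_cont_v. apply (Mc_cont n C Ct Cv l H).
    - apply continuity_2d_pt_inv.
      + apply cont2d_of_cont_v. apply (lc_cont n C Ct Cv l H).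
      + apply Rgt_not_eq. apply Hpos. apply clamp_in. }
  split.
  - intros J [phi [dphi [Dt' [Dv' [Hp [Hd ->]]]]]]. simpl.
    rewrite (energy_formula n C Ct Cv l phi dphi Dt' Dv' H Hp Hd).
    destruct Hp as [_ [_ Hdc]].
    apply RInt_le; [lra| exact HT| |].
    + apply (exRInt01 _ (fun v => Tv n Ct Cv (clamp v) +
          2 * PI * (dphi (clamp v) * l (clamp v) + Mv n Ct Cv (clamp v)) ^ 2)).
      * intros v. apply cont_of_2d.
        apply continuity_2d_pt_plus.
        { apply cont2d_of_cont_v. apply (Tc_cont n C Ct Cv l H). }
        apply continuity_2d_pt_mult; [apply continuity_2d_pt_const|].
        assert (Hx : continuity_2d_pt (fun _ v0 => dphi (clamp v0) * l (clamp v0) + Mv n Ct Cv (clamp v0)) 0 v).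
        { apply continuity_2d_pt_plus.
          { apply continuity_2d_pt_mult; apply cont2d_of_cont_v.
            - apply cont_01_clamp; auto.
            - apply (lc_cont n C Ct Cv l H). }
          apply cont2d_of_cont_v. apply (Mc_cont n C Ct Cv l H). }
        simpl. apply continuity_2d_pt_mult; [exact Hx|].
        apply continuity_2d_pt_mult; [exact Hx| apply continuity_2d_pt_const].
      * intros v Hv. rewrite clamp_id; auto.
    + intros v _. pose proof PI_RGT_0.
      assert (0 <= (dphi v * l v + Mv n Ct Cv v) ^ 2) by (rewrite <- Rsqr_pow2; apply Rle_0_sqr).
      assert (0 <= 2 * PI * (dphi v * l v + Mv n Ct Cv v) ^ 2) by (apply Rmult_le_pos; lra).
      lra.
  - intros b Hb. apply Hb.
    set (phi := fun v => - RInt psi 0 v).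
    set (dphi := fun v => - psi v).
    assert (Hder : forall v, is_derive phi v (dphi v)).
    { intros v. unfold phi, dphi.
      apply (is_derive_opp (fun x => RInt psi 0 x)).
      apply (is_derive_RInt psi (fun x => RInt psi 0 x) 0 v); auto.
      exists (mkposreal 1 Rlt_0_1). intros y _. apply (RInt_correct (V:=R_CompleteNormedModule)). apply exR_cont; auto. }
    assert (Hp : C1_01 phi dphi).
    { split; [|split].
      - intros v _. apply derive_to_01; auto.
      - apply cont_to_01. intros v. exact (ex_derive_continuous phi v (ex_intro _ (dphi v) (Hder v))).
      - apply cont_to_01. intros v. apply cont_of_eps. intros eps He.
        destruct (cont_eps psi v (Hpsi v) eps He) as [d [Hd Hd2]].
        exists d; split; auto. intros w Hw. unfold dphi.
        replace (- psi w - - psi v) with (- (psi w - psi v)) by ring. rewrite Rabs_Ropp. auto. }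
    assert (Hdphi : forall v, dphi v = - (Mv n Ct Cv (clamp v) * / l (clamp v))) by reflexivity.
    clearbody phi dphi.
    destruct HC as [Hper [Hpd Hc]].
    exists phi, dphi,
      (fun th v k => Ct (th + phi v) v k),
      (fun th v k => Cv (th + phi v) v k + dphi v * Ct (th + phi v) v k).
    split; [exact Hp| split].
    + intros th v Hv k Hk. split.
      * apply (derive_shift (fun s => C s v k) (phi v) th). apply (Hpd (th + phi v) v Hv k Hk).
      * apply (chain01 (fun s w => C s w k) (fun s w => Ct s w k) (fun s w => Cv s w k) phi (dphi v) th v).
        -- intros s w Hw. apply (Hpd s w Hw k Hk).
        -- apply Hc; auto.
        -- apply (Hpd (th + phi v) v Hv k Hk).
        -- apply Hp; auto.
        -- auto.
    + rewrite (energy_formula n C Ct Cv l phi dphi); auto.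
      * apply RInt_ext. intros v Hv.
        rewrite Rmin_left, Rmax_right in Hv by lra.
        assert (Hi : inI v) by (unfold inI; lra).
        rewrite Hdphi, clamp_id by auto.
        pose proof (Hpos v Hi).
        replace (- (Mv n Ct Cv v * / l v) * l v + Mv n Ct Cv v) with 0 by (field; lra).
        replace (2 * PI * 0 ^ 2) with 0 by ring. symmetry. apply Rplus_0_r.
      * intros th v Hv k Hk. split.
        -- apply (derive_shift (fun s => C s v k) (phi v) th). apply (Hpd (th + phi v) v Hv k Hk).
        -- apply (chain01 (fun s w => C s w k) (fun s w => Ct s w k) (fun s w => Cv s w k) phi (dphi v) th v).
           ++ intros s w Hw. apply (Hpd s w Hw k Hk).
           ++ apply Hc; auto.
           ++ apply (Hpd (th + phi v) v Hv k Hk).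
           ++ apply Hp; auto.
           ++ auto.
Qed.
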